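(* Let $X$ be a topological space, $Y$ a completely regular space, $G$ an infinite open subset of $Y$, $g,h:X\to\mathbb R$ continuous functions with $g\le0\le h$, and $A$ a functionally closed subset of $X$. Then there exists a separately continuous function $f:X\times Y\to\mathbb R$ such that $\operatorname{supp}f\subseteq(X\setminus A)\times G$ and, for every $x\in X\setminus A$, $\min_{y\in G}f(x,y)=g(x)$ and $\max_{y\in G}f(x,y)=h(x)$ (the minimum and maximum being attained).
   Context: Completely regular spaces are assumed $T_1$. $A\subseteq X$ is functionally closed if $A=\alpha^{-1}(0)$ for some continuous $\alpha:X\to[0,1]$. $\operatorname{supp}f=\{(x,y):f(x,y)\ne0\}$. $f$ is separately continuous if it is continuous in each variable when the other is fixed. *)

(* Defs.v *)
From HB Require Import structures.
From mathcomp Require Import all_boot all_order all_algebra.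
From mathcomp Require Import all_classical all_reals all_analysis.
Set Implicit Arguments. Unset Strict Implicit. Unset Printing Implicit Defensive.
Import Order.TTheory GRing.Theory Num.Theory.
Import numFieldNormedType.Exports.
Local Open Scope classical_set_scope.
Local Open Scope ring_scope.

(* Completely regular (Tychonoff) space: points and closed sets are separated
   by continuous functions into [0,1]; plus the T1 axiom (accessible_space). *)
Definition completely_regular (R : realType) (T : topologicalType) : Prop :=
  accessible_space T /\
  forall (a : T) (B : set T), closed B -> ~ B a ->
    exists phi : T -> R, continuous phi /\ (forall t, 0 <= phi t <= 1) /\
      phi a = 0 /\ (forall b, B b -> phi b = 1).

Definition functionally_closed (R : realType) (T : topologicalType) (A : set T) : Prop :=
  exists alpha : T -> R, continuous alpha /\ (forall t, 0 <= alpha t <= 1) /\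
    A = alpha @^-1` [set 0].

Definition separately_continuous (R : realType) (X Y : topologicalType)
  (f : X * Y -> R) : Prop :=
  (forall x : X, continuous (fun y : Y => f (x, y))) /\
  (forall y : Y, continuous (fun x : X => f (x, y))).

Definition supp (R : realType) (T : Type) (f : T -> R) : set T := [set p | f p != 0].

(* Main.v *)
Require Import Defs.
From HB Require Import structures.
From mathcomp Require Import all_boot all_order all_algebra.
From mathcomp Require Import all_classical all_reals all_analysis.
From mathcomp Require Import lra.
Import Order.TTheory GRing.Theory Num.Theory.
Import numFieldNormedType.Exports.
Local Open Scope classical_set_scope.
Local Open Scope ring_scope.

Section C.
Context {R : realType} {T : topologicalType}.
Implicit Types f g : T -> R.
Lemma cD f g : continuous f -> continuous g -> continuous (fun x => f x + g x).
Proof. move=> cf cg x; have := (@continuousD R R^o T f g x (cf x) (cg x)). done. Qed.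
Lemma cM f g : continuous f -> continuous g -> continuous (fun x => f x * g x).
Proof. move=> cf cg x; have := (@continuousM R T f g x (cf x) (cg x)). done. Qed.
Lemma cC (c : R) : continuous (fun _ : T => c).
Proof. by move=> x; apply: cst_continuous. Qed.
Lemma cMax f g : continuous f -> continuous g -> continuous (fun x => Num.max (f x) (g x)).
Proof. move=> cf cg x; have := (@continuous_max R T f g x (cf x) (cg x)). done. Qed.
Lemma cMin f g : continuous f -> continuous g -> continuous (fun x => Num.min (f x) (g x)).
Proof. move=> cf cg x; have := (@continuous_min R T f g x (cf x) (cg x)). done. Qed.
Lemma cId : continuous (fun x : R => x).
Proof. by move=> x. Qed.
Lemma cComp (f : T -> R) (p : R -> R) : continuous f -> continuous p -> continuous (fun x => p (f x)).
Proof. by move=> cf cp x; apply: continuous_comp; [apply: cf| apply: cp]. Qed.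
Lemma cN f : continuous f -> continuous (fun x => - f x).
Proof. move=> cf x; have := (@continuousN R R^o T f x (cf x)). done. Qed.
End C.


Section Psi.
Context {R : realType}.
Definition clamp (x : R) := Num.max 0 (Num.min 1 x).
Lemma clamp0 x : x <= 0 -> clamp x = 0.
Proof. move=> h; rewrite /clamp min_r; [rewrite max_l //|lra]. Qed.
Lemma clamp1 x : 1 <= x -> clamp x = 1.
Proof. move=> h; rewrite /clamp min_l // max_r //; lra. Qed.
Lemma clamp01 x : 0 <= clamp x <= 1.
Proof.
rewrite /clamp; apply/andP; split; first by rewrite le_max lexx.
by rewrite ge_max ler01 /= ge_min lexx.
Qed.
Lemma min_le0 (a b : R) : a <= 0 \/ b <= 0 -> Num.min a b <= 0.
Proof. by case=> h; rewrite ge_min h ?orbT. Qed.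
Lemma min_ge1 (a b : R) : 1 <= a -> 1 <= b -> 1 <= Num.min a b.
Proof. by move=> ha hb; rewrite le_min ha hb. Qed.

Definition psi (n : nat) (t : R) : R :=
  let a := n%:R in
  clamp (Num.min ((a+2)*(a+3)*t - (a+2)) ((a+1) - a*(a+1)*t)).

Lemma psi_01 n t : 0 <= psi n t <= 1.
Proof. exact: clamp01. Qed.

Lemma psi0 n : psi n 0 = 0.
Proof.
have h : 0 <= n%:R :> R by [].
rewrite /psi clamp0 //; apply: min_le0; left; lra.
Qed.

Lemma psi_one t : 0 < t -> t <= 1 -> exists n, psi n t = 1.
Proof.
move=> t0 t1.
have ti : 1 <= t^-1 by rewrite invr_ge1 // unitfE gt_eqF.
have /andP[h1 h2] := trunc_itv (le_trans ler01 ti).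
move: h1 h2; case: (Num.trunc t^-1) => [|n] h1 h2.
  by move: h2; rewrite ltNge ti.
exists n; rewrite /psi.
have a0 : 0 <= n%:R :> R by [].
move: h1 h2; rewrite -!natr1 => h1 h2.
have e1 : (n%:R + 1) * t <= 1 by move: h1; rewrite -div1r ler_pdivlMr.
have e2 : 1 < (n%:R + 1 + 1) * t by move: h2; rewrite -div1r ltr_pdivrMr.
apply: clamp1; apply: min_ge1; nra.
Qed.

Lemma psi_zero (t : R) (n : nat) : 0 < t -> ((Num.trunc t^-1).+1 <= n)%N -> psi n t = 0.
Proof.
move=> t0 hn.
have ti : 0 <= t^-1 by rewrite invr_ge0 ltW.
have /andP[h1 h2] := trunc_itv ti.
have hn' : (Num.trunc t^-1).+1%:R <= n%:R :> R by rewrite ler_nat.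
have e : 1 < n%:R * t.
  by move: (lt_le_trans h2 hn'); rewrite -div1r ltr_pdivrMr.
have a0 : 0 <= n%:R :> R by [].
rewrite /psi clamp0 //; apply: min_le0; right; nra.
Qed.

Lemma psi_cont n : continuous (psi n).
Proof.
rewrite /psi /clamp.
apply: cMax; first exact: cC.
apply: cMin; first exact: cC.
apply: cMin; apply: cD; try apply: cN; try exact: cC.
  by apply: cM; [exact: cC|exact: cId].
by apply: cM; [exact: cC|exact: cId].
Qed.
End Psi.

Section Top.
Context {R : realType} {Y : topologicalType}.
Hypothesis CR : completely_regular R Y.

Lemma bump_at (W : set Y) p : open W -> W p -> exists b : Y -> R,
  continuous b /\ (forall y, 0 <= b y <= 1) /\ b p = 1 /\ (forall y, b y != 0 -> W y).
Proof.
move=> oW Wp; case: CR => _ cr.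
have [rho [crho [r01 [rp rB]]]] := cr p (~` W) (open_closedC oW) (fun h => h Wp).
exists (fun y => 1 - rho y); split; first by apply: cD; [exact: cC| apply: cN].
split; first by move=> y; have /andP[? ?] := r01 y; apply/andP; split; lra.
split; first by rewrite rp subr0.
move=> y h; case: (pselect (W y)) => // nW; move: h; rewrite rB // subrr eqxx //.
Qed.

Definition stepP (W : set Y) (b : Y -> R) (W' : set Y) (p : Y) :=
  continuous b /\ (forall y, 0 <= b y <= 1) /\ b p = 1 /\ (forall y, b y != 0 -> W y) /\
  open W' /\ infinite_set W' /\ W' `<=` W /\ (forall y, W' y -> b y = 0).

Lemma step_core (W : set Y) (phi : Y -> R) p : open W -> continuous phi ->
  (forall y, 0 <= phi y <= 1) -> W p -> phi p = 1 ->
  infinite_set (W `&` [set y | phi y < 2/3]) ->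
  exists b W' p', stepP W b W' p'.
Proof.
move=> oW cphi phi01 Wp php inf.
have [ps [cps [ps01 [psp psW]]]] := bump_at W p oW Wp.
exists (fun y => Num.max 0 (3 * phi y - 2) * ps y), (W `&` [set y | phi y < 2/3]), p.
have tau01 : forall y, 0 <= Num.max 0 (3 * phi y - 2) <= 1.
  move=> y; have /andP[? ?] := phi01 y.
  rewrite le_max lexx ge_max ler01 /=; lra.
split.
  apply: cM => //; apply: cMax; first exact: cC.
  by apply: cD; [apply: cM; [exact: cC|exact: cphi]| exact: cC].
split.
  move=> y; have /andP[? ?] := tau01 y; have /andP[? ?] := ps01 y.
  by rewrite mulr_ge0 //= mulr_ile1.
split; first by rewrite php psp mulr1 max_r //; lra.
split.
  move=> y; apply: contra_neqP => nW.
  have -> : ps y = 0 by case: (eqVneq (ps y) 0) => // /psW /nW [].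
  by rewrite mulr0.
split.
  apply: openI => //; apply: (@open_comp _ _ phi [set x : R | x < 2/3]); last exact: open_lt.
  by move=> y _; exact: cphi.
split => //.
split; first by move=> y [].
move=> y [_ /= h]; rewrite max_l ?mul0r //; lra.
Qed.

Lemma step (W : set Y) : open W -> infinite_set W -> exists b W' p, stepP W b W' p.
Proof.
move=> oW iW.
have [a Wa] := infinite_setN0 iW.
have iW' : infinite_set (W `\` [set a]) by apply: infinite_setD => //; exact: finite_set1.
have [b [Wb nba]] := infinite_setN0 iW'.
case: CR => acc cr.
have [phi [cphi [phi01 [pa pb]]]] := cr a [set b] (@accessible_closed_set1 _ acc b)
   (fun h => nba (esym h)).
have phib : phi b = 1 by apply: pb.
case: (pselect (finite_set (W `&` [set y | phi y < 2/3]))) => fin; last first.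
  exact: (step_core W phi b oW cphi phi01 Wb phib fin).
apply: (@step_core W (fun y => 1 - phi y) a oW).
- by apply: cD; [exact: cC|apply: cN].
- by move=> y; have /andP[? ?] := phi01 y; apply/andP; split; lra.
- exact: Wa.
- by rewrite pa subr0.
move=> fin2; apply: iW.
apply: (@sub_finite_set _ _ ((W `&` [set y | phi y < 2/3]) `|` (W `&` [set y | 1 - phi y < 2/3]))).
  move=> y Wy; case: (pselect (phi y < 2/3)) => h; [left|right]; split => //=.
  by move/negP: h; rewrite -leNgt => h; lra.
by rewrite finite_setU.
Qed.
End Top.

Lemma cSum {R : realType} {T : topologicalType} (F : nat -> T -> R) N :
  (forall k, continuous (F k)) -> continuous (fun y => \sum_(k < N) F k y).
Proof.
move=> cF; elim: N => [|N IH].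
  have -> : (fun y => \sum_(k < 0) F k y) = (fun _ => 0) by apply: funext => y; rewrite big_ord0.
  exact: cC.
have -> : (fun y => \sum_(k < N.+1) F k y) = (fun y => \sum_(k < N) F k y + F N y).
  by apply: funext => y; rewrite big_ord_recr.
by apply: cD.
Qed.

Lemma sum_single {R : realType} (F : nat -> R) j N :
  (forall k, k != j -> F k = 0) -> \sum_(k < N) F k = if (j < N)%N then F j else 0.
Proof.
move=> hF; elim: N => [|N IH]; first by rewrite big_ord0.
rewrite big_ord_recr /= IH.
case: (ltngtP j N) => hj.
- have h1 : (j < N.+1)%N by rewrite ltnS ltnW.
  by rewrite h1 (hF N) ?addr0 // gtn_eqF.
- have h1 : (j < N.+1)%N = false by rewrite ltnS leqNgt hj.
  by rewrite h1 (hF N) ?addr0 // ltn_eqF.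
- by rewrite hj ltnS leqnn add0r.
Qed.

Theorem lemma7p1 (R : realType) (X Y : topologicalType)
  (G : set Y) (g h : X -> R) (A : set X) :
  completely_regular R Y ->
  open G -> infinite_set G ->
  continuous g -> continuous h ->
  (forall x, g x <= 0) -> (forall x, 0 <= h x) ->
  functionally_closed R A ->
  exists f : X * Y -> R,
    separately_continuous f /\
    supp f `<=` (~` A) `*` G /\
    (forall x, ~ A x ->
       (forall y, G y -> g x <= f (x, y) <= h x) /\
       (exists2 y, G y & f (x, y) = g x) /\
       (exists2 y, G y & f (x, y) = h x)).
Proof.
move=> CR oG iG cg ch g0 h0 [al [cal [al01 HA]]].
have [y0 _] := infinite_setN0 iG.
have SC : forall W : set Y, exists q : (Y -> R) * set Y * Y,
    open W -> infinite_set W -> stepP W q.1.1 q.1.2 q.2.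
  move=> W; case: (pselect (open W /\ infinite_set W)) => [[oW iW]|nW].
    by have [b [W' [p H]]] := step CR W oW iW; exists (b, W', p).
  by exists ((fun _ => 0), set0, y0) => oW iW; exfalso; apply: nW.
have [F HF] := choice SC.
pose Ws n := iter n (fun W => (F W).1.2) G.
pose be n := (F (Ws n)).1.1.
pose pt n := (F (Ws n)).2.
have Hn : forall n, open (Ws n) /\ infinite_set (Ws n) /\ stepP (Ws n) (be n) (Ws n.+1) (pt n).
  elim=> [|n [oW [iW _]]].
    by split => //; split => //; apply: HF.
  have [_ [_ [_ [_ [oW' [iW' _]]]]]] := HF _ oW iW.
  by split => //; split => //; apply: HF.
have HS : forall n, [/\ continuous (be n), (forall y, 0 <= be n y <= 1), be n (pt n) = 1,
    (forall y, be n y != 0 -> Ws n y) & (Ws n.+1 `<=` Ws n /\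
    (forall y, Ws n.+1 y -> be n y = 0))].
  move=> n; have [_ [_ [cb [b01 [bp [bW [_ [_ [sb zb]]]]]]]]] := Hn n.
  by split.
have sub1 : forall n, Ws n.+1 `<=` Ws n by move=> n; case: (HS n) => _ _ _ _ [].
have subn : forall n m, (n <= m)%N -> Ws m `<=` Ws n.
  move=> n m /subnK <-; elim: (m - n)%N => [|d IH] //=.
  by move=> y H; apply: IH; apply: (sub1 (d + n)%N); exact: H.
have beW : forall n y, be n y != 0 -> Ws n y by move=> n; case: (HS n).
have beG : forall n y, be n y != 0 -> G y.
  by move=> n y /beW; apply: (subn 0%N n).
have be01 : forall n y, 0 <= be n y <= 1 by move=> n; case: (HS n).
have bept : forall n, be n (pt n) = 1 by move=> n; case: (HS n).
have cbe : forall n, continuous (be n) by move=> n; case: (HS n).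
have zbe : forall n y, Ws n.+1 y -> be n y = 0 by move=> n; case: (HS n) => _ _ _ _ [].
have disj0 : forall j k y, (j < k)%N -> be k y != 0 -> be j y = 0.
  move=> j k y jk /beW /(subn j.+1 k jk); exact: zbe.
have disj : forall j k y, j != k -> be j y != 0 -> be k y = 0.
  move=> j k y; rewrite neq_ltn => /orP[] jk bj.
    by apply/eqP; apply: contraNT bj => /negbTE bk; apply/eqP; apply: (disj0 _ k) => //; rewrite bk.
  by apply: (disj0 _ j).
have KC : forall y, exists k : nat, (exists j, be j y != 0) -> be k y != 0.
  move=> y; case: (pselect (exists j, be j y != 0)) => [[j hj]|nj].
    by exists j.
  by exists 0%N.
have [kf Hkf] := choice KC.
have kfE : forall j y, be j y != 0 -> kf y = j.
  move=> j y bj; have bk := Hkf y (ex_intro _ j bj).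
  apply/eqP; apply: contraT => nk.
  by move: bj; rewrite (disj _ _ _ nk bk) eqxx.
pose c k x := (if odd k then g x else h x) * psi k./2 (al x).
have cc : forall k, continuous (c k).
  move=> k; apply: cM; first by case: (odd k).
  by apply: cComp => //; exact: psi_cont.
pose f (p : X * Y) := c (kf p.2) p.1 * be (kf p.2) p.2.
have ANx : forall x, ~ A x -> 0 < al x.
  move=> x nA; have /andP[a0 _] := al01 x; rewrite lt_neqAle a0 andbT eq_sym.
  by apply/negP => /eqP e; apply: nA; rewrite HA /= e.
exists f; split; [split|split].
- move=> x.
  case: (pselect (al x = 0)) => [a0|an0].
    have -> : (fun y => f (x, y)) = (fun _ => 0).
      by apply: funext => y; rewrite /f /c /= a0 psi0 mulr0 mul0r.
    exact: cC.
  have apos : 0 < al x by have /andP[a0 _] := al01 x; rewrite lt_neqAle a0 andbT eq_sym; apply/eqP.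
  pose M := (Num.trunc (al x)^-1).+1.
  have c0 : forall k, (M.*2 <= k)%N -> c k x = 0.
    move=> k hk; rewrite /c psi_zero ?mulr0 //.
    by have := half_leq hk; rewrite doubleK.
  have -> : (fun y => f (x, y)) = (fun y => \sum_(k < M.*2) c k x * be k y).
    apply: funext => y; rewrite /f /=.
    case: (pselect (exists j, be j y != 0)) => [[j bj]|nj].
      rewrite (kfE _ _ bj) (sum_single (fun k => c k x * be k y) j).
        by case: ifP => // /negbT; rewrite -leqNgt => /c0 ->; rewrite mul0r.
      by move=> k kj; rewrite (disj _ _ _ (negbT _) bj) ?mulr0 // eq_sym; apply/negbTE.
    have allz : forall k, be k y = 0.
      by move=> k; case: (eqVneq (be k y) 0) => // bk; exfalso; apply: nj; exists k.
    by rewrite allz mulr0 big1 // => k _; rewrite allz mulr0.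
  by apply: (cSum (fun k y => c k x * be k y)) => k; apply: cM; [exact: cC|exact: cbe].
- move=> y; rewrite /f /=; apply: cM; [exact: cc|exact: cC].
- move=> [x y]; rewrite /supp /= => hf; split => /=.
    move=> Ax; move: hf; rewrite /f /c /=.
    by move: Ax; rewrite HA /= => ->; rewrite psi0 mulr0 mul0r eqxx.
  apply: (beG (kf y)); apply: contraNN hf => /eqP e; by rewrite /f /= e mulr0.
- move=> x nA; have apos := ANx x nA.
  have al1 : al x <= 1 by have /andP[_ ?] := al01 x.
  have [n pn] := psi_one (al x) apos al1.
  split.
    move=> y _; rewrite /f /c /=.
    have /andP[u0 u1] := psi_01 (kf y)./2 (al x).
    have /andP[v0 v1] := be01 (kf y) y.
    set u := psi _ _; set v := be _ _.
    have w0 : 0 <= u * v by apply: mulr_ge0.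
    have w1 : u * v <= 1 by apply: mulr_ile1.
    have := g0 x; have := h0 x.
    case: (odd _) => hx gx; rewrite -mulrA; apply/andP; split; nra.
  split.
    exists (pt n.*2.+1); first by apply: (beG n.*2.+1); rewrite bept oner_neq0.
    rewrite /f /c /= (kfE n.*2.+1); last by rewrite bept oner_neq0.
    by rewrite /= odd_double /= uphalf_double pn bept !mulr1.
  exists (pt n.*2); first by apply: (beG n.*2); rewrite bept oner_neq0.
  rewrite /f /c /= (kfE n.*2); last by rewrite bept oner_neq0.
  by rewrite odd_double doubleK pn bept !mulr1.
Qed.
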